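(* Let $k$ be a positive integer. If an edge-colored graph $G$ of order $n$ satisfies $\delta^c(G)\ge n/2+64k+1$, then $G$ contains $k$ vertex-disjoint rainbow cycles.
   Context: An edge-colored graph is a finite simple graph $G$ with a map $C:E(G)\to\mathbb{N}$. The color degree $d^c(v)$ of a vertex $v$ is the number of distinct colors on edges incident to $v$; $\delta^c(G)=\min_{v\in V(G)} d^c(v)$. A subgraph is rainbow if all its edges have distinct colors. *)

(* Defs.v *)
From mathcomp Require Import all_boot.
Set Implicit Arguments. Unset Strict Implicit. Unset Printing Implicit Defensive.

(* A finite simple graph on vertex type T: symmetric irreflexive relation e.
   An edge-colouring: c : T -> T -> nat with c x y = c y x; only its values
   on edges matter. *)
Definition simple_graph (T : finType) (e : rel T) :=
  symmetric e /\ irreflexive e.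

Definition edge_coloring (T : finType) (c : T -> T -> nat) :=
  forall x y, c x y = c y x.

Definition color_degree (T : finType) (e : rel T) (c : T -> T -> nat) (v : T) : nat :=
  size (undup [seq c v u | u <- enum T & e v u]).

Definition cycle_colors (T : finType) (c : T -> T -> nat) (s : seq T) : seq nat :=
  [seq c p.1 p.2 | p <- zip s (rot 1 s)].

Definition is_graph_cycle (T : finType) (e : rel T) (s : seq T) : bool :=
  [&& 3 <= size s, uniq s & cycle e s].

Definition rainbow_cycle (T : finType) (e : rel T) (c : T -> T -> nat) (s : seq T) : bool :=
  is_graph_cycle e s && uniq (cycle_colors c s).

(* Main.v *)
Require Import Defs.
From mathcomp Require Import all_boot.
From Stdlib Require Import Classical.
From mathcomp Require Import zify.
Set Implicit Arguments. Unset Strict Implicit. Unset Printing Implicit Defensive.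


Lemma undup_count_le (T : eqType) (s : seq T) a :
  a \in s -> size (undup s) + count_mem a s <= size s + 1.
Proof.
move=> as_.
have sub : {subset undup s <= a :: filter (predC1 a) s}.
  move=> x; rewrite mem_undup inE mem_filter /=.
  by case: (x =P a) => //= _ ->.
have := uniq_leq_size (undup_uniq s) sub.
rewrite /= size_filter.
have := count_predC (pred1 a) s.
move=> H1 H2; rewrite /= in H2.
have E : count (predC1 a) s = count (predC (pred1 a)) s by apply: eq_count.
lia.
Qed.

Lemma count_filterC1 (T : eqType) (s : seq T) a b :
  b != a -> count_mem b (filter (predC1 a) s) = count_mem b s.
Proof.
move=> nba; elim: s => //= x l IH.
case: (x =P a) => [->|nxa] /=.
  by rewrite IH eq_sym (negbTE nba).
by rewrite IH.
Qed.

Lemma undup_multi_le (T : eqType) (s : seq T) :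
  (forall b, b \in s -> 2 <= count_mem b s) -> (size (undup s)).*2 <= size s.
Proof.
move: {2}(size s) (leqnn (size s)) => N; elim: N s => [|N IH] s.
  by rewrite leqn0 => /eqP/size0nil ->.
move=> Hs H.
case E: s => [|a s']; first by [].
rewrite -E.
have as_ : a \in s by rewrite E inE eqxx.
have sub : {subset undup s <= a :: undup (filter (predC1 a) s)}.
  by move=> x; rewrite mem_undup inE mem_undup mem_filter /=; case: eqP.
have H1 := uniq_leq_size (undup_uniq s) sub.
have Ha : 2 <= count_mem a s by apply: H.
have Hsz : size (filter (predC1 a) s) + count_mem a s = size s.
  have E2 : count (predC1 a) s = count (predC (pred1 a)) s by apply: eq_count.
  have := count_predC (pred1 a) s.
  rewrite size_filter; lia.
have H2 : forall b, b \in filter (predC1 a) s -> 2 <= count_mem b (filter (predC1 a) s).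
  move=> b; rewrite mem_filter => /andP [nba bs].
  rewrite count_filterC1 //; exact: H.
have H3 : size (filter (predC1 a) s) <= N by lia.
have := IH (filter (predC1 a) s) H3 H2.
move: H1 => /=; lia.
Qed.

Lemma count_mem_filter (T : eqType) (q : pred T) (s : seq T) b :
  q b -> count_mem b (filter q s) = count_mem b s.
Proof.
move=> qb; elim: s => //= x l IH.
case qx: (q x) => /=; rewrite IH //.
by case: (x =P b) qx => // ->; rewrite qb.
Qed.

Lemma undup_single_le (T : eqType) (s : seq T) :
  (size (undup s)).*2 <= size s + count (fun b => count_mem b s == 1) s.
Proof.
set p := (fun b => count_mem b s == 1).
have sub : {subset undup s <= filter p s ++ undup (filter (predC p) s)}.
  move=> x; rewrite mem_undup mem_cat mem_undup !mem_filter /=.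
  by move=> ->; rewrite !andbT orbN.
have H1 := uniq_leq_size (undup_uniq s) sub.
have H2 : (size (undup (filter (predC p) s))).*2 <= size (filter (predC p) s).
  apply: undup_multi_le => b; rewrite mem_filter => /andP [nb bs].
  rewrite count_mem_filter //.
  have : 0 < count_mem b s by rewrite -has_count has_pred1.
  move: nb; rewrite /= /p; lia.
have := count_predC p s.
rewrite size_cat !size_filter in H1 H2.
lia.
Qed.

Lemma count_enum_card (T : finType) (P : pred T) : count P (enum T) = #|[set x | P x]|.
Proof. rewrite cardsE cardE -size_filter enumT /enum_mem /=.
by [].
Qed.

Definition Nbr (T : finType) (g : rel T) x := [set y | g x y].
Definition cls (T : finType) (c : T -> T -> nat) (g : rel T) x a :=
  [set y | g x y && (c x y == a)].
Definition uni (T : finType) (c : T -> T -> nat) (g : rel T) x y :=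
  #|cls c g x (c x y)| == 1.

Definition cols (T : finType) (c : T -> T -> nat) (g : rel T) v :=
  [seq c v u | u <- enum T & g v u].

Lemma cdE (T : finType) (c : T -> T -> nat) (g : rel T) v :
  color_degree g c v = size (undup (cols c g v)).
Proof. by []. Qed.

Lemma size_colors (T : finType) (c : T -> T -> nat) (g : rel T) v :
  size (cols c g v) = #|Nbr g v|.
Proof. by rewrite size_map size_filter count_enum_card. Qed.

Lemma count_colors (T : finType) (c : T -> T -> nat) (g : rel T) v a :
  count_mem a (cols c g v) = #|cls c g v a|.
Proof.
rewrite count_map count_filter count_enum_card; apply: eq_card => y.
by rewrite !inE /= andbC.
Qed.

Lemma count_single (T : finType) (c : T -> T -> nat) (g : rel T) v :
  count (fun b => count_mem b (cols c g v) == 1)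
        (cols c g v) = #|[set y | g v y && uni c g v y]|.
Proof.
set L := cols c g v.
have -> : count (fun b => count_mem b L == 1) L =
   count (fun u => g v u && (count_mem (c v u) L == 1)) (enum T).
  by rewrite /L count_map count_filter; apply: eq_count => u /=; rewrite andbC.
rewrite count_enum_card; apply: eq_card => y.
by rewrite !inE /L count_colors.
Qed.

Lemma card_ind (T : finType) (A B : {set T}) :
  #|A :&: B| = \sum_(u in A) (u \in B : nat).
Proof.
rewrite -sum1_card big_mkcond [RHS]big_mkcond /=; apply: eq_bigr => u _.
by rewrite inE; case: (u \in A); case: (u \in B).
Qed.

Lemma not_uni (T : finType) (c : T -> T -> nat) (g : rel T) x y y' :
  g x y -> g x y' -> y != y' -> c x y = c x y' -> ~~ uni c g x y.
Proof.
move=> gy gy' nyy' cyy'; rewrite /uni.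
have : #|[set y; y']| <= #|cls c g x (c x y)|.
  apply: subset_leq_card; apply/subsetP => u; rewrite !inE.
  by case/orP => /eqP ->; rewrite ?gy ?gy' ?cyy' eqxx.
by rewrite cards2 nyy'; case: #|_| => // [[|]].
Qed.

Lemma cd_cls (T : finType) (c : T -> T -> nat) (g : rel T) x y :
  g x y -> color_degree g c x + #|cls c g x (c x y)| <= #|Nbr g x| + 1.
Proof.
move=> gxy; rewrite cdE -count_colors -(size_colors c); apply: undup_count_le.
by apply: map_f; rewrite mem_filter mem_enum gxy.
Qed.

Lemma cd_le (T : finType) (c : T -> T -> nat) (g : rel T) x :
  color_degree g c x <= #|Nbr g x|.
Proof. by rewrite cdE -(size_colors c); apply: size_undup. Qed.

Definition Par (T : finType) (c : T -> T -> nat) (g : rel T) x :=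
  [set z | g z x && ~~ uni c g z x].
Definition Chl (T : finType) (c : T -> T -> nat) (g : rel T) x :=
  [set y | g x y && ~~ uni c g x y].

Lemma chl_bound (T : finType) (c : T -> T -> nat) (g : rel T) x :
  #|Chl c g x| <= (#|Nbr g x| - color_degree g c x).*2.
Proof.
have H1 := undup_single_le (cols c g x).
rewrite size_colors count_single in H1.
have H2 : #|[set y | g x y && uni c g x y]| + #|Chl c g x| = #|Nbr g x|.
  rewrite -(cardsID [set y | uni c g x y] (Nbr g x)); congr (_ + _); apply: eq_card => y.
  1,2: by unfold Nbr, Chl; rewrite !inE // andbC.
have H3 := cd_le c g x.
rewrite cdE in H3 *.
lia.
Qed.

Lemma card_sum (T : finType) (A : {set T}) : #|A| = \sum_u (u \in A : nat).
Proof.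
rewrite -sum1_card big_mkcond /=; apply: eq_bigr => u _.
by case: (u \in A).
Qed.

Lemma caseB (T : finType) (c : T -> T -> nat) (g : rel T) (U : {set T}) :
  symmetric g -> irreflexive g -> (forall x y, c x y = c y x) ->
  (forall x y, g x y -> x \in U) ->
  (forall v, v \in U -> #|U| + 1 <= (color_degree g c v).*2) ->
  (exists v, v \in U) ->
  (forall x y, g x y -> uni c g x y || uni c g y x) ->
  (forall x y z, g x y -> g y z -> g z x ->
     c x y = c y z \/ c y z = c z x \/ c z x = c x y) ->
  False.
Proof.
move=> gsym girr csym gU Hdeg [v0 v0U] Ha HNR.
have gU' : forall x y, g x y -> y \in U by move=> x y; rewrite gsym; apply: gU.
have gneq : forall x y, g x y -> x != y.
  by move=> x y gxy; apply/eqP => exy; move: gxy; rewrite exy girr.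
have parE : forall z x, (z \in Par c g x) = g z x && ~~ uni c g z x.
  by move=> z x; rewrite inE.
have par_chl : forall z x, (z \in Par c g x) = (x \in Chl c g z).
  by move=> z x; rewrite !inE.
have noboth : forall u z, u \in Par c g z -> z \in Par c g u -> False.
  move=> u z; rewrite !parE => /andP [guz nu] /andP [_ nz].
  by move: (Ha u z guz); rewrite (negbTE nu) (negbTE nz).
have key : forall z x, z \in Par c g x ->
    1 + (#|Nbr g x| - color_degree g c x) <= #|Par c g z :&: Par c g x|.
  move=> z x zPx; have := zPx; rewrite parE => /andP [gzx nuzx].
  have sub : Nbr g z :&: Nbr g x \subset
             (cls c g z (c z x) :\ x) :|: (Par c g z :&: Par c g x).
    apply/subsetP => y; rewrite !inE => /andP [gzy gxy].
    have gyz : g y z by rewrite gsym.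
    have gxz : g x z by rewrite gsym.
    case: (HNR z x y gzx gxy gyz) => [E|[E|E]].
    - (* c z x = c x y : two at x *)
      exfalso.
      have nxz : ~~ uni c g x z.
        by apply: (not_uni gxz gxy (gneq _ _ gzy)); rewrite csym E.
      by move: (Ha x z gxz); rewrite (negbTE nxz) (negbTE nuzx).
    - (* c x y = c y z : two at y *)
      apply/orP; right.
      have gyx : g y x by rewrite gsym.
      have nxz : x != z by apply: gneq.
      have n1 : ~~ uni c g y z.
        by apply: (not_uni gyz gyx); [rewrite eq_sym|rewrite -E csym].
      have n2 : ~~ uni c g y x.
        by apply: (not_uni gyx gyz nxz); rewrite -E csym.
      by rewrite gyz gyx n1 n2.
    - (* c y z = c z x : y in class of x at z *)
      apply/orP; left.
      have nyx : y != x by rewrite eq_sym; apply: gneq.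
      by rewrite nyx gzy -E csym eqxx.
  have H1 := subset_leq_card sub.
  have H2 := cardsU (cls c g z (c z x) :\ x) (Par c g z :&: Par c g x).
  have H3 := cardsD1 x (cls c g z (c z x)).
  have xcls : x \in cls c g z (c z x) by rewrite inE gzx eqxx.
  rewrite xcls in H3.
  have H4 := cardsUI (Nbr g z) (Nbr g x).
  have H5 : #|Nbr g z :|: Nbr g x| <= #|U|.
    apply: subset_leq_card; apply/subsetP => y; rewrite !inE.
    by case/orP; [apply: gU'|apply: gU'].
  have H6 := cd_cls c gzx.
  have H7 := cd_le c g x.
  have H8 := Hdeg z (gU _ _ gzx).
  have H9 := Hdeg x (gU' _ _ gzx).
  lia.
have parbig : forall x, Par c g x != set0 ->
    (#|Nbr g x| - color_degree g c x).*2 < #|Par c g x|.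
  move=> x /set0Pn [z0 z0P].
  set X := Par c g x.
  set e := #|Nbr g x| - color_degree g c x.
  set S := \sum_(z in X) \sum_(u in X) (u \in Par c g z : nat).
  have low : #|X| * (1 + e) <= S.
    have -> : #|X| * (1 + e) = \sum_(z in X) (1 + e) by rewrite sum_nat_const.
    rewrite /S; apply: leq_sum => z zX.
    by rewrite -card_ind setIC; apply: key.
  have S' : \sum_(z in X) \sum_(u in X) (z \in Par c g u : nat) = S.
    by rewrite /S exchange_big.
  have D : \sum_(z in X) \sum_(u in X) (u == z : nat) = #|X|.
    rewrite -sum1_card; apply: eq_bigr => z zX.
    rewrite (bigD1 z) //= eqxx big1 // => u /andP [_ /negbTE ->] //.
  have up : S + S + #|X| <= #|X| * #|X|.
    have E1 : S + S + #|X| = \sum_(z in X) \sum_(u in X)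
        ((z \in Par c g u) + (u \in Par c g z) + (u == z) : nat).
      by rewrite -{1}S' -D -!big_split /=; apply: eq_bigr => z _; rewrite -!big_split.
    have E2 : #|X| * #|X| = \sum_(z in X) \sum_(u in X) 1.
      symmetry; rewrite (eq_bigr (fun=> #|X|)) => [|z _]; first by rewrite sum_nat_const.
      by rewrite sum1_card.
    rewrite E1 E2; apply: leq_sum => z zX; apply: leq_sum => u uX.
    case: (u =P z) => [->|nuz].
      by rewrite !parE girr.
    case uP: (u \in Par c g z); case zP: (z \in Par c g u) => //.
    by case: (noboth _ _ uP zP).
  have X0 : 0 < #|X| by apply/card_gt0P; exists z0.
  nia.
have chl0 : forall x, Par c g x = set0 -> Chl c g x = set0.
  move=> x Px; apply/eqP; apply/negPn/negP => /set0Pn [y yC].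
  rewrite -par_chl in yC.
  have := key _ _ yC; rewrite Px set0I cards0; lia.
have chl_le : forall x, #|Chl c g x| <= #|Par c g x|.
  move=> x; case: (eqVneq (Par c g x) set0) => [P0|Pn].
    by rewrite (chl0 _ P0) P0.
  have := parbig _ Pn; have := chl_bound c g x; lia.
have sumeq : \sum_x #|Par c g x| = \sum_x #|Chl c g x|.
  rewrite (eq_bigr (fun x => \sum_z (z \in Par c g x : nat))); last by move=> x _; rewrite card_sum.
  rewrite [RHS](eq_bigr (fun x => \sum_z (z \in Chl c g x : nat))); last by move=> x _; rewrite card_sum.
  rewrite exchange_big; apply: eq_bigr => x _; apply: eq_bigr => z _.
  by rewrite par_chl.
have allempty : forall x, Par c g x = set0.
  move=> x0; apply/eqP; apply/negPn/negP => Pn.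
  have := parbig _ Pn; have := chl_bound c g x0 => H1 H2.
  have H3 : \sum_(x | x != x0) #|Chl c g x| <= \sum_(x | x != x0) #|Par c g x|.
    by apply: leq_sum => x _; apply: chl_le.
  move: sumeq; rewrite (bigD1 x0) //= [X in _ = X](bigD1 x0) //= => E.
  clear -H1 H2 H3 E; lia.
have inpar : forall a b b', g a b -> g a b' -> b != b' -> c a b = c a b' -> False.
  move=> a b b' gab gab' nbb' E.
  have : a \in Par c g b by rewrite parE gab (not_uni gab gab' nbb' E).
  by rewrite allempty inE.
have U0 : 0 < #|U| by apply/card_gt0P; exists v0.
have := Hdeg v0 v0U; have := cd_le c g v0 => Hl1 Hl2.
have : 0 < #|Nbr g v0| by clear -U0 Hl1 Hl2; lia.
case/card_gt0P => y; rewrite inE => gvy.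
have Hy := Hdeg y (gU' _ _ gvy); have Hl3 := cd_le c g y.
have H4 := cardsUI (Nbr g v0) (Nbr g y).
have H5 : #|Nbr g v0 :|: Nbr g y| <= #|U|.
  apply: subset_leq_card; apply/subsetP => u; rewrite !inE.
  by case/orP; apply: gU'.
have : 0 < #|Nbr g v0 :&: Nbr g y| by clear -Hl1 Hl2 Hy Hl3 H4 H5; lia.
case/card_gt0P => w; rewrite !inE => /andP [gvw gyw].
have gwv : g w v0 by rewrite gsym.
case: (HNR v0 y w gvy gyw gwv) => [E|[E|E]].
- have gyv : g y v0 by rewrite gsym.
  apply: (inpar y v0 w gyv gyw (gneq _ _ gvw)).
  by rewrite csym E.
- have gwy : g w y by rewrite gsym.
  have nyv : y != v0 by rewrite eq_sym; apply: gneq.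
  apply: (inpar w y v0 gwy gwv nyv).
  by rewrite csym E.
- have nwy : w != y by rewrite eq_sym; apply: gneq.
  apply: (inpar v0 w y gvw gvy nwy).
  by rewrite csym E.
Qed.

Lemma cd_eq (T : finType) (c : T -> T -> nat) (g g' : rel T) v :
  (forall u, g' v u -> g v u) ->
  (forall u, g v u -> exists u', g' v u' /\ c v u' = c v u) ->
  color_degree g' c v = color_degree g c v.
Proof.
move=> sub1 sub2; rewrite !cdE; apply: perm_size; apply: uniq_perm; try exact: undup_uniq.
move=> a; rewrite !mem_undup; apply/mapP/mapP => [[u]|[u]];
  rewrite mem_filter mem_enum andbT => guv ->.
  by exists u => //; rewrite mem_filter mem_enum andbT; apply: sub1.
have [u' [g'u' E]] := sub2 u guv.
by exists u' => //; rewrite mem_filter mem_enum andbT.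
Qed.

Definition rtri (T : finType) (c : T -> T -> nat) (g : rel T) :=
  exists x y z, [/\ g x y, g y z, g z x & [/\ c x y <> c y z, c y z <> c z x & c z x <> c x y]].

Lemma other_in_cls (T : finType) (c : T -> T -> nat) (g : rel T) v u :
  g v u -> ~~ uni c g v u -> exists u', [/\ g v u', u' != u & c v u' = c v u].
Proof.
move=> gvu nu.
have ucls : u \in cls c g v (c v u) by rewrite inE gvu eqxx.
have := cardsD1 u (cls c g v (c v u)); rewrite ucls.
move: nu; rewrite /uni => nu E.
have : 0 < #|cls c g v (c v u) :\ u| by move: nu; rewrite E; case: #|_|.
case/card_gt0P => u'; rewrite !inE => /and3P [nu' gvu' /eqP cu'].
by exists u'.
Qed.

Lemma tri_exists (T : finType) (c : T -> T -> nat) (csym : forall x y, c x y = c y x) (n : nat) :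
  forall (g : rel T) (U : {set T}),
  #|[set p : T * T | g p.1 p.2]| <= n ->
  symmetric g -> irreflexive g ->
  (forall x y, g x y -> x \in U) ->
  (forall v, v \in U -> #|U| + 1 <= (color_degree g c v).*2) ->
  (exists v, v \in U) -> rtri c g.
Proof.
have noRem : forall (g : rel T) (U : {set T}), symmetric g -> irreflexive g ->
    (forall x y, g x y -> x \in U) ->
    (forall v, v \in U -> #|U| + 1 <= (color_degree g c v).*2) ->
    (exists v, v \in U) ->
    (forall x y, g x y -> uni c g x y || uni c g y x) -> rtri c g.
  move=> g U gsym girr gU Hdeg HU Ha.
  case: (classic (rtri c g)) => // Hn; exfalso.
  apply: (caseB gsym girr csym gU Hdeg HU Ha) => x y z gxy gyz gzx.
  case: (c x y =P c y z) => [|n1]; first by left.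
  case: (c y z =P c z x) => [|n2]; first by right; left.
  case: (c z x =P c x y) => [|n3]; first by right; right.
  by case: Hn; exists x, y, z.
elim: n => [|n IH] g U Hn gsym girr gU Hdeg HU;
  (case: (boolP [exists x, exists y, [&& g x y, ~~ uni c g x y & ~~ uni c g y x]])
    => [/existsP [x /existsP [y /and3P [gxy nx ny]]] | /existsPn H];
   [ | apply: (noRem g U gsym girr gU Hdeg HU) => x y gxy;
       by move/existsPn: (H x) => /(_ y); rewrite gxy /= negb_and !negbK]).
  by move: Hn; rewrite leqn0 => /eqP/cards0_eq/setP/(_ (x, y)); rewrite !inE gxy.
have gneq : forall u v, g u v -> u != v.
  by move=> u v guv; apply/eqP => euv; move: guv; rewrite euv girr.
pose g' u v := g u v && ~~ ((u == x) && (v == y)) && ~~ ((u == y) && (v == x)).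
have g'g : forall u v, g' u v -> g u v by move=> u v /andP [/andP [] ].
have [x' [y' [z' [g1 g2 g3 Hc]]]] : rtri c g'; last by exists x', y', z'; split; rewrite ?g'g.
have nxy : x != y by apply: gneq.
apply: (IH g' U).
- have : [set p : T * T | g' p.1 p.2] \proper [set p : T * T | g p.1 p.2].
    apply/properP; split.
      by apply/subsetP => p; rewrite !inE; apply: g'g.
    by exists (x, y); rewrite !inE /g' /= ?gxy ?eqxx.
  move/proper_card; move: Hn; lia.
- move=> u v; rewrite /g' gsym.
  by case: (u =P x); case: (v =P y); case: (u =P y); case: (v =P x); rewrite ?andbT ?andbF.
- by move=> u; rewrite /g' girr.
- by move=> u v /g'g; apply: gU.
- move=> v vU; rewrite (@cd_eq _ c g g' v); first exact: Hdeg.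
    exact: g'g.
  move=> u gvu.
  case E1: ((v == x) && (u == y)).
    case/andP: E1 => /eqP ev /eqP eu; subst v u.
    have [u' [gu' nu' cu']] := other_in_cls gxy nx.
    exists u'; split => //; rewrite /g' gu' eqxx /= nu' /=.
    by rewrite (negbTE nxy).
  case E2: ((v == y) && (u == x)).
    case/andP: E2 => /eqP ev /eqP eu; subst v u.
    have gyx : g y x by rewrite gsym.
    have [u' [gu' nu' cu']] := other_in_cls gyx ny.
    exists u'; split => //; rewrite /g' gu' eqxx /=.
    by rewrite nu' andbT eq_sym (negbTE nxy).
  by exists u; split => //; rewrite /g' gvu E1 E2.
- exact: HU.
Qed.

Lemma disj_seq (T : finType) (s1 s2 : seq T) :
  (forall x, x \in s1 -> x \in s2 -> False) -> [disjoint s1 & s2].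
Proof.
move=> H; rewrite disjoint_has; apply/hasPn => x xs2; apply/negP => xs1.
exact: (H x).
Qed.

Lemma mem_nth_flatten (T : eqType) (cs : seq (seq T)) j x :
  j < size cs -> x \in nth [::] cs j -> x \in flatten cs.
Proof.
move=> hj hx; apply/flattenP; exists (nth [::] cs j) => //; exact: mem_nth.
Qed.

Lemma flatten_disj (T : finType) (cs : seq (seq T)) :
  uniq (flatten cs) -> forall i j, i < size cs -> j < size cs -> i != j ->
  [disjoint nth [::] cs i & nth [::] cs j].
Proof.
elim: cs => //= t cs IH; rewrite cat_uniq => /and3P [ut nh uf] [|i] [|j] //= hi hj nij.
- apply: disj_seq => x xt xj.
  by move/hasPn: nh => /(_ x (mem_nth_flatten hj xj)); rewrite xt.
- apply: disj_seq => x xi xt.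
  by move/hasPn: nh => /(_ x (mem_nth_flatten hi xi)); rewrite xt.
- exact: IH.
Qed.

Lemma cd_restrict (T : finType) (c : T -> T -> nat) (e : rel T) (U : {set T}) v :
  v \in U ->
  color_degree e c v <= color_degree (fun u w => [&& u \in U, w \in U & e u w]) c v + #|~: U|.
Proof.
move=> vU; rewrite !cdE.
set gU := (fun u w => [&& u \in U, w \in U & e u w]).
have sub : {subset undup (cols c e v) <= undup (cols c gU v) ++ [seq c v u | u <- enum (~: U)]}.
  move=> a; rewrite mem_undup mem_cat mem_undup => /mapP [u].
  rewrite mem_filter mem_enum andbT => evu ->.
  case uU: (u \in U).
    by apply/orP; left; apply: map_f; rewrite mem_filter mem_enum andbT /gU vU uU evu.
  by apply/orP; right; apply: map_f; rewrite mem_enum inE uU.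
have := uniq_leq_size (undup_uniq _) sub.
by rewrite size_cat size_map -cardE.
Qed.

Lemma find_tri (T : finType) (e : rel T) (c : T -> T -> nat) (k : nat) (W : {set T}) :
  simple_graph e -> edge_coloring c -> 0 < #|T| ->
  (forall v : T, #|T| + 128 * k + 2 <= 2 * color_degree e c v) ->
  #|W| <= 128 * k + 1 ->
  exists x y z, [/\ x \notin W, y \notin W, z \notin W & rainbow_cycle e c [:: x; y; z]].
Proof.
move=> [esym eirr] csym T0 Hdeg HW.
set U := ~: W.
set gU := (fun u w => [&& u \in U, w \in U & e u w]).
have cU : #|U| + #|W| = #|T| by rewrite addnC cardsC.
have nbT : forall v, color_degree e c v <= #|T| - 1.
  move=> v; apply: (leq_trans (cd_le c e v)).
  rewrite subn1 -(cardsC1 v); apply: subset_leq_card; apply/subsetP => u; rewrite !inE.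
  by apply: contraTneq => ->; rewrite eirr.
have [v0 _] : exists v0 : T, true by case/card_gt0P: T0 => v0; exists v0.
have := Hdeg v0; have := nbT v0 => H1 H2.
have U0 : 0 < #|U| by clear -H1 H2 HW cU; lia.
have gsym : symmetric gU by move=> u w; rewrite /gU esym andbCA.
have girr : irreflexive gU by move=> u; rewrite /gU eirr !andbF.
have gsup : forall x y, gU x y -> x \in U by move=> x y /and3P [].
have Hd : forall v, v \in U -> #|U| + 1 <= (color_degree gU c v).*2.
  move=> v vU; have := cd_restrict c e vU; rewrite setCK -/gU => H3.
  have := Hdeg v; clear -H3 HW cU; lia.
have HU : exists v, v \in U by case/card_gt0P: U0 => v; exists v.
have [x [y [z [gxy gyz gzx [n1 n2 n3]]]]] :=
  tri_exists csym (leqnn _) gsym girr gsup Hd HU.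
move: gxy gyz gzx; rewrite /gU /U !inE => /and3P [xW yW exy] /and3P [_ zW eyz] /and3P [_ _ ezx].
exists x, y, z; split => //.
have nxy : x != y by apply: contraTneq exy => ->; rewrite eirr.
have nyz : y != z by apply: contraTneq eyz => ->; rewrite eirr.
have nzx : z != x by apply: contraTneq ezx => ->; rewrite eirr.
rewrite /rainbow_cycle /is_graph_cycle /cycle_colors /= exy eyz ezx.
rewrite !inE negb_or nxy eq_sym nzx nyz /=.
rewrite negb_or andbT.
rewrite -andbA; apply/and3P; split; apply/eqP => E.
all: by [apply: n1 | apply: n2 | apply: n3 | apply: n1; rewrite E | apply: n2; rewrite E | apply: n3; rewrite E].
Qed.

Lemma size_flatten3 (T : eqType) (cs : seq (seq T)) :
  (forall s, s \in cs -> size s = 3) -> size (flatten cs) = 3 * size cs.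
Proof.
elim: cs => //= t cs IH H; rewrite size_cat H ?mem_head // IH; first lia.
by move=> s sc; apply: H; rewrite inE sc orbT.
Qed.

Theorem corollary1 (k : nat) (T : finType) (e : rel T) (c : T -> T -> nat) :
  0 < k ->
  simple_graph e ->
  edge_coloring c ->
  0 < #|T| ->
  (* delta^c(G) >= n/2 + 64k + 1, cleared of the fraction *)
  (forall v : T, #|T| + 128 * k + 2 <= 2 * color_degree e c v) ->
  exists C : 'I_k -> seq T,
    (forall i, rainbow_cycle e c (C i)) /\
    (forall i j, i != j -> [disjoint C i & C j]).
Proof.
move=> k0 sg ec T0 Hdeg.
have inv : forall j, j <= k -> exists cs : seq (seq T),
    [/\ size cs = j, (forall s, s \in cs -> rainbow_cycle e c s /\ size s = 3)
      & uniq (flatten cs)].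
  elim => [|j IH] hj; first by exists [::].
  have [cs [scs Hcs ucs]] := IH (ltnW hj).
  set W := [set x in flatten cs].
  have HW : #|W| <= 128 * k + 1.
    rewrite cardsE; apply: (leq_trans (card_size _)).
    rewrite size_flatten3; last by move=> s /Hcs [].
    rewrite scs; clear -hj; lia.
  have [x [y [z [xW yW zW rc]]]] := find_tri sg ec T0 Hdeg HW.
  exists ([:: x; y; z] :: cs); split.
  - by rewrite /= scs.
  - move=> s; rewrite inE => /orP [/eqP ->|sc]; last exact: Hcs.
    by split.
  - rewrite (_ : flatten _ = [:: x; y; z] ++ flatten cs) // cat_uniq ucs andbT.
    move: rc => /andP [/and3P [_ -> _] _] /=.
    apply/hasPn => u uf; rewrite !inE.
    have uW : u \in W by rewrite inE.
    apply/negP => /or3P [] /eqP eu; subst u.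
    + by rewrite uW in xW.
    + by rewrite uW in yW.
    + by rewrite uW in zW.
have [cs [scs Hcs ucs]] := inv k (leqnn k).
exists (fun i => nth [::] cs i); split.
  move=> i; apply: (proj1 (Hcs _ _)); apply: mem_nth; rewrite scs; exact: ltn_ord.
move=> i j nij; apply: flatten_disj => //; rewrite ?scs ?ltn_ord //.
Qed.
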